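(* Let $(X,d)$ be a bicomplete quasi-pseudometric space. Let $J:X\to X$ be a continuous single-valued map such that $r\,d(x,y)\le d(Jx,Jy)$ for all $x,y\in X$, for some constant $r>0$. Let $F:X\to CB(X)$ be a set-valued map such that $$H(Fx,Fy)\le \alpha\big[d(Jx,Fy)+d(Fx,Jy)\big]\quad\text{for all }x,y\in X,$$ where $0<\alpha<1/2$ and $2r\alpha<1$. Then there exists a unique $x_0\in X$ which is both a startpoint and an endpoint of $J$ and $F$ if and only if $J$ and $F$ have the approximate mix-point property.
   Context: A quasi-pseudometric on a nonempty set $X$ is a map $d:X\times X\to[0,\infty)$ with $d(x,x)=0$ and $d(x,z)\le d(x,y)+d(y,z)$ for all $x,y,z$; it is $T_0$ if $d(x,y)=0=d(y,x)$ implies $x=y$. Write $d^s(x,y)=\max\{d(x,y),d(y,x)\}$. The space $(X,d)$ is bicomplete if $d$ is $T_0$ and the metric $d^s$ is complete. For $x\in X$ and nonempty $A\subseteq X$: $d(x,A)=\inf_{a\in A}d(x,a)$, $d(A,x)=\inf_{a\in A}d(a,x)$. For nonempty $A,B\subseteq X$: $H(A,B)=\max\{\sup_{a\in A}d(a,B),\ \sup_{b\in B}d(A,b)\}$. $CB(X)$ denotes the family of nonempty $d^s$-bounded, $\tau(d^s)$-closed subsets of $X$; continuity of $J$ is with respect to $\tau(d^s)$. For $J:X\to X$ and $F:X\to 2^X$, a point $x$ is a startpoint of $J$ and $F$ if $H(\{Jx\},Fx)=0$ and an endpoint of $J$ and $F$ if $H(Fx,\{Jx\})=0$. $J$ and $F$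 have the approximate mix-point property if $\inf_{x\in X}\sup_{y\in Fx}d^s(Jx,y)=0$. *)

(* Defs.v *)
From Stdlib Require Import Reals Lra ClassicalEpsilon.
Open Scope R_scope.

Definition is_inf (P : R -> Prop) (m : R) : Prop :=
  (forall y, P y -> m <= y) /\ (forall m', (forall y, P y -> m' <= y) -> m' <= m).

(* inf and sup of a set of reals (chosen classically; meaningful when they exist) *)
Definition Rinf (P : R -> Prop) : R := epsilon (inhabits 0) (fun m => is_inf P m).
Definition Rsup (P : R -> Prop) : R := epsilon (inhabits 0) (fun m => is_lub P m).

Section QPM.
Context {X : Type}.

Definition quasi_pseudometric (d : X -> X -> R) : Prop :=
  (forall x y, 0 <= d x y) /\ (forall x, d x x = 0) /\
  (forall x y z, d x z <= d x y + d y z).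

Definition T0 (d : X -> X -> R) : Prop :=
  forall x y, d x y = 0 -> d y x = 0 -> x = y.

Definition ds (d : X -> X -> R) (x y : X) : R := Rmax (d x y) (d y x).

Definition ds_cauchy (d : X -> X -> R) (u : nat -> X) : Prop :=
  forall eps, 0 < eps -> exists N, forall m n, (N <= m)%nat -> (N <= n)%nat ->
    ds d (u m) (u n) < eps.

Definition ds_converges (d : X -> X -> R) (u : nat -> X) (x : X) : Prop :=
  forall eps, 0 < eps -> exists N, forall n, (N <= n)%nat -> ds d (u n) x < eps.

Definition bicomplete (d : X -> X -> R) : Prop :=
  T0 d /\ forall u, ds_cauchy d u -> exists x, ds_converges d u x.

Definition dpt_set (d : X -> X -> R) (x : X) (A : X -> Prop) : R :=
  Rinf (fun t => exists a, A a /\ t = d x a).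
Definition dset_pt (d : X -> X -> R) (A : X -> Prop) (x : X) : R :=
  Rinf (fun t => exists a, A a /\ t = d a x).
Definition Haus (d : X -> X -> R) (A B : X -> Prop) : R :=
  Rmax (Rsup (fun t => exists a, A a /\ t = dpt_set d a B))
       (Rsup (fun t => exists b, B b /\ t = dset_pt d A b)).

Definition ds_bounded (d : X -> X -> R) (A : X -> Prop) : Prop :=
  exists M, forall a b, A a -> A b -> ds d a b <= M.
Definition ds_closed (d : X -> X -> R) (A : X -> Prop) : Prop :=
  forall x, (forall eps, 0 < eps -> exists a, A a /\ ds d x a < eps) -> A x.
Definition CB (d : X -> X -> R) (A : X -> Prop) : Prop :=
  (exists a, A a) /\ ds_bounded d A /\ ds_closed d A.

Definition ds_continuous (d : X -> X -> R) (J : X -> X) : Prop :=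
  forall x eps, 0 < eps -> exists delta, 0 < delta /\
    forall y, ds d x y < delta -> ds d (J x) (J y) < eps.

Definition singleton (y : X) : X -> Prop := fun z => z = y.

Definition startpoint (d : X -> X -> R) (J : X -> X) (F : X -> X -> Prop) (x : X) : Prop :=
  Haus d (singleton (J x)) (F x) = 0.
Definition endpoint (d : X -> X -> R) (J : X -> X) (F : X -> X -> Prop) (x : X) : Prop :=
  Haus d (F x) (singleton (J x)) = 0.

Definition approx_mix_point (d : X -> X -> R) (J : X -> X) (F : X -> X -> Prop) : Prop :=
  Rinf (fun t => exists x, t = Rsup (fun s => exists y, F x y /\ s = ds d (J x) y)) = 0.

End QPM.

(* Main.v *)
Require Import Defs.
From Stdlib Require Import Reals Lra ClassicalEpsilon Classical.
Open Scope R_scope.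

Lemma is_inf_unique P m1 m2 : is_inf P m1 -> is_inf P m2 -> m1 = m2.
Proof. intros [H1 H2] [H3 H4]. apply Rle_antisym; [apply H4|apply H2]; assumption. Qed.

Lemma Rinf_is_inf P L : (exists y, P y) -> (forall y, P y -> L <= y) -> is_inf P (Rinf P).
Proof.
  intros [y0 Hy0] HL. unfold Rinf. apply epsilon_spec.
  destruct (completeness (fun t => P (- t))) as [m [Hm1 Hm2]].
  - exists (- L). intros t Ht. specialize (HL _ Ht). lra.
  - exists (- y0). rewrite Ropp_involutive. exact Hy0.
  - exists (- m). split.
    + intros y Hy. assert (- y <= m). { apply Hm1. rewrite Ropp_involutive; exact Hy. } lra.
    + intros m' Hm'. assert (m <= - m'). { apply Hm2. intros t Ht. specialize (Hm' _ Ht). lra. } lra.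
Qed.

Lemma inf_approx P m eps : is_inf P m -> 0 < eps -> exists y, P y /\ y < m + eps.
Proof.
  intros [H1 H2] He. destruct (classic (exists y, P y /\ y < m + eps)) as [H|Hn]; auto.
  exfalso. assert (m + eps <= m). { apply H2. intros y Hy.
  destruct (Rle_or_lt (m+eps) y); auto. exfalso; apply Hn; eauto. } lra.
Qed.

Lemma Rsup_is_lub P U : (exists y, P y) -> (forall y, P y -> y <= U) -> is_lub P (Rsup P).
Proof.
  intros Hne HU. unfold Rsup. apply epsilon_spec.
  destruct (completeness P) as [m Hm]; [exists U; exact HU | exact Hne | eauto].
Qed.

Lemma d_nonneg {X} (d : X -> X -> R) : quasi_pseudometric d -> forall x y, 0 <= d x y.
Proof. intros [h _]; apply h. Qed.
Lemma d_refl {X} (d : X -> X -> R) : quasi_pseudometric d -> forall x, d x x = 0.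
Proof. intros [_ [h _]]; apply h. Qed.
Lemma d_tri {X} (d : X -> X -> R) : quasi_pseudometric d -> forall x y z, d x z <= d x y + d y z.
Proof. intros [_ [_ h]]; apply h. Qed.
Lemma ds_l {X} (d : X -> X -> R) x y : d x y <= ds d x y.
Proof. unfold ds; apply Rmax_l. Qed.
Lemma ds_r {X} (d : X -> X -> R) x y : d y x <= ds d x y.
Proof. unfold ds; apply Rmax_r. Qed.
Lemma ds_sym {X} (d : X -> X -> R) x y : ds d x y = ds d y x.
Proof. unfold ds; apply Rmax_comm. Qed.
Lemma ds_tri {X} (d : X -> X -> R) : quasi_pseudometric d -> forall x y z, ds d x z <= ds d x y + ds d y z.
Proof.
  intros hq x y z. pose proof (d_tri d hq x y z). pose proof (d_tri d hq z y x).
  pose proof (ds_l d x y). pose proof (ds_r d x y). pose proof (ds_l d y z). pose proof (ds_r d y z).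
  unfold ds at 1. apply Rmax_lub; lra.
Qed.
Lemma ds_nonneg {X} (d : X -> X -> R) : quasi_pseudometric d -> forall x y, 0 <= ds d x y.
Proof. intros hq x y. pose proof (ds_l d x y). pose proof (d_nonneg d hq x y). lra. Qed.

Lemma dpt_inf {X} (d : X -> X -> R) : quasi_pseudometric d -> forall x A, (exists a, A a) ->
  is_inf (fun t => exists a, A a /\ t = d x a) (dpt_set d x A).
Proof. intros hq x A [a Ha]. unfold dpt_set. apply Rinf_is_inf with 0.
  exists (d x a); eauto. intros t [b [_ ->]]; apply (d_nonneg d hq). Qed.
Lemma dpt_le {X} (d : X -> X -> R) : quasi_pseudometric d -> forall x A a, A a -> dpt_set d x A <= d x a.
Proof. intros hq x A a Ha. apply (proj1 (dpt_inf d hq x A (ex_intro _ a Ha))). exists a; auto. Qed.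
Lemma dpt_ge {X} (d : X -> X -> R) : quasi_pseudometric d -> forall x A c, (exists a, A a) ->
  (forall a, A a -> c <= d x a) -> c <= dpt_set d x A.
Proof. intros hq x A c Hne Hc. apply (proj2 (dpt_inf d hq x A Hne)). intros t [a [Ha ->]]; auto. Qed.
Lemma dpt_nonneg {X} (d : X -> X -> R) : quasi_pseudometric d -> forall x A, (exists a, A a) -> 0 <= dpt_set d x A.
Proof. intros hq x A Hne. apply (dpt_ge d hq); auto. intros; apply (d_nonneg d hq). Qed.
Lemma dpt_approx {X} (d : X -> X -> R) : quasi_pseudometric d -> forall x A eps, (exists a, A a) -> 0 < eps ->
  exists a, A a /\ d x a < dpt_set d x A + eps.
Proof. intros hq x A eps Hne He.
  destruct (inf_approx _ _ eps (dpt_inf d hq x A Hne) He) as [t [[a [Ha ->]] Ht]]. eauto. Qed.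

Lemma dset_inf {X} (d : X -> X -> R) : quasi_pseudometric d -> forall A x, (exists a, A a) ->
  is_inf (fun t => exists a, A a /\ t = d a x) (dset_pt d A x).
Proof. intros hq A x [a Ha]. unfold dset_pt. apply Rinf_is_inf with 0.
  exists (d a x); eauto. intros t [b [_ ->]]; apply (d_nonneg d hq). Qed.
Lemma dset_le {X} (d : X -> X -> R) : quasi_pseudometric d -> forall A x a, A a -> dset_pt d A x <= d a x.
Proof. intros hq A x a Ha. apply (proj1 (dset_inf d hq A x (ex_intro _ a Ha))). exists a; auto. Qed.
Lemma dset_ge {X} (d : X -> X -> R) : quasi_pseudometric d -> forall A x c, (exists a, A a) ->
  (forall a, A a -> c <= d a x) -> c <= dset_pt d A x.
Proof. intros hq A x c Hne Hc. apply (proj2 (dset_inf d hq A x Hne)). intros t [a [Ha ->]]; auto. Qed.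
Lemma dset_nonneg {X} (d : X -> X -> R) : quasi_pseudometric d -> forall A x, (exists a, A a) -> 0 <= dset_pt d A x.
Proof. intros hq A x Hne. apply (dset_ge d hq); auto. intros; apply (d_nonneg d hq). Qed.
Lemma dset_approx {X} (d : X -> X -> R) : quasi_pseudometric d -> forall A x eps, (exists a, A a) -> 0 < eps ->
  exists a, A a /\ d a x < dset_pt d A x + eps.
Proof. intros hq A x eps Hne He.
  destruct (inf_approx _ _ eps (dset_inf d hq A x Hne) He) as [t [[a [Ha ->]] Ht]]. eauto. Qed.

Definition NB {X} (d : X -> X -> R) (A : X -> Prop) := (exists a, A a) /\ ds_bounded d A.

Lemma Haus_lub1 {X} (d : X -> X -> R) : quasi_pseudometric d -> forall A B, NB d A -> NB d B ->
  is_lub (fun t => exists a, A a /\ t = dpt_set d a B) (Rsup (fun t => exists a, A a /\ t = dpt_set d a B)).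
Proof.
  intros hq A B [[a0 Ha0] [MA HMA]] [[b0 Hb0] [MB HMB]]. apply Rsup_is_lub with (MA + d a0 b0).
  - exists (dpt_set d a0 B); eauto.
  - intros t [a [Ha ->]]. pose proof (dpt_le d hq a B b0 Hb0). pose proof (d_tri d hq a a0 b0).
    pose proof (ds_l d a a0). pose proof (HMA a a0 Ha Ha0). lra.
Qed.
Lemma Haus_lub2 {X} (d : X -> X -> R) : quasi_pseudometric d -> forall A B, NB d A -> NB d B ->
  is_lub (fun t => exists b, B b /\ t = dset_pt d A b) (Rsup (fun t => exists b, B b /\ t = dset_pt d A b)).
Proof.
  intros hq A B [[a0 Ha0] [MA HMA]] [[b0 Hb0] [MB HMB]]. apply Rsup_is_lub with (d a0 b0 + MB).
  - exists (dset_pt d A b0); eauto.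
  - intros t [b [Hb ->]]. pose proof (dset_le d hq A b a0 Ha0). pose proof (d_tri d hq a0 b0 b).
    pose proof (ds_l d b0 b). pose proof (HMB b0 b Hb0 Hb). lra.
Qed.
Lemma Haus_ge_l {X} (d : X -> X -> R) : quasi_pseudometric d -> forall A B a, NB d A -> NB d B -> A a ->
  dpt_set d a B <= Haus d A B.
Proof. intros hq A B a HA HB Ha. unfold Haus. eapply Rle_trans; [|apply Rmax_l].
  apply (proj1 (Haus_lub1 d hq A B HA HB)). exists a; auto. Qed.
Lemma Haus_ge_r {X} (d : X -> X -> R) : quasi_pseudometric d -> forall A B b, NB d A -> NB d B -> B b ->
  dset_pt d A b <= Haus d A B.
Proof. intros hq A B b HA HB Hb. unfold Haus. eapply Rle_trans; [|apply Rmax_r].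
  apply (proj1 (Haus_lub2 d hq A B HA HB)). exists b; auto. Qed.
Lemma Haus_le {X} (d : X -> X -> R) : quasi_pseudometric d -> forall A B c, NB d A -> NB d B ->
  (forall a, A a -> dpt_set d a B <= c) -> (forall b, B b -> dset_pt d A b <= c) -> Haus d A B <= c.
Proof. intros hq A B c HA HB H1 H2. unfold Haus. apply Rmax_lub.
  - apply (proj2 (Haus_lub1 d hq A B HA HB)). intros t [a [Ha ->]]; auto.
  - apply (proj2 (Haus_lub2 d hq A B HA HB)). intros t [a [Ha ->]]; auto. Qed.

Lemma NB_single {X} (d : X -> X -> R) : quasi_pseudometric d -> forall x, NB d (singleton x).
Proof. intros hq x. split. exists x; reflexivity. exists 0. intros a b Ha Hb.
  unfold singleton in *; subst. unfold ds; rewrite (d_refl d hq). apply Rmax_lub; lra. Qed.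
Lemma NB_CB {X} (d : X -> X -> R) A : CB d A -> NB d A.
Proof. intros [H1 [H2 _]]; split; auto. Qed.

Lemma le_eps u v : (forall eps, 0 < eps -> u <= v + eps) -> u <= v.
Proof. intros H. destruct (Rle_or_lt u v); auto. specialize (H ((u - v)/2)). lra. Qed.

Lemma small c eps : 0 <= c -> 0 < eps -> exists N, forall n, (N <= n)%nat -> c * / (INR n + 1) < eps.
Proof.
  intros Hc He. destruct (INR_unbounded (c/eps)) as [N HN]. exists N. intros n Hn.
  apply le_INR in Hn. pose proof (pos_INR n).
  assert (Hce : c / eps * eps = c) by (field; lra).
  assert (c < eps * (INR n + 1)) by nra.
  apply Rmult_lt_reg_r with (INR n + 1); [lra|]. rewrite Rmult_assoc, Rinv_l; lra.
Qed.

Lemma se_zero {X} (d : X -> X -> R) (J : X -> X) (F : X -> X -> Prop) x :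
  quasi_pseudometric d -> CB d (F x) -> startpoint d J F x -> endpoint d J F x ->
  forall b, F x b -> d (J x) b = 0 /\ d b (J x) = 0.
Proof.
  intros hq hcb Hs He b Hb. pose proof (NB_CB d _ hcb) as HN. pose proof (NB_single d hq (J x)) as HS.
  unfold startpoint, endpoint in *.
  pose proof (Haus_ge_r d hq _ _ b HS HN Hb).
  pose proof (Haus_ge_l d hq _ _ b HN HS Hb).
  assert (d (J x) b <= dset_pt d (singleton (J x)) b).
  { apply (dset_ge d hq). exists (J x); reflexivity. intros a Ha; unfold singleton in Ha; subst; lra. }
  assert (d b (J x) <= dpt_set d b (singleton (J x))).
  { apply (dpt_ge d hq). exists (J x); reflexivity. intros a Ha; unfold singleton in Ha; subst; lra. }
  pose proof (d_nonneg d hq (J x) b). pose proof (d_nonneg d hq b (J x)). lra.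
Qed.

Lemma se_of_zero {X} (d : X -> X -> R) (J : X -> X) (F : X -> X -> Prop) x :
  quasi_pseudometric d -> CB d (F x) ->
  (forall b, F x b -> d (J x) b = 0 /\ d b (J x) = 0) -> startpoint d J F x /\ endpoint d J F x.
Proof.
  intros hq hcb Hz. pose proof (NB_CB d _ hcb) as HN. pose proof (NB_single d hq (J x)) as HS.
  destruct hcb as [[b0 Hb0] _]. unfold startpoint, endpoint. split; apply Rle_antisym.
  - apply (Haus_le d hq); auto.
    + intros a Ha; unfold singleton in Ha; subst. pose proof (dpt_le d hq (J x) (F x) b0 Hb0).
      destruct (Hz b0 Hb0); lra.
    + intros b Hb. pose proof (dset_le d hq (singleton (J x)) b (J x) eq_refl). destruct (Hz b Hb); lra.
  - eapply Rle_trans; [|apply (Haus_ge_l d hq _ _ (J x) HS HN eq_refl)].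
    apply (dpt_nonneg d hq). exists b0; auto.
  - apply (Haus_le d hq); auto.
    + intros b Hb. pose proof (dpt_le d hq b (singleton (J x)) (J x) eq_refl). destruct (Hz b Hb); lra.
    + intros a Ha; unfold singleton in Ha; subst. pose proof (dset_le d hq (F x) (J x) b0 Hb0).
      destruct (Hz b0 Hb0); lra.
  - eapply Rle_trans; [|apply (Haus_ge_r d hq _ _ (J x) HN HS eq_refl)].
    apply (dset_nonneg d hq). exists b0; auto.
Qed.

Lemma S_lub {X} (d : X -> X -> R) (J : X -> X) (F : X -> X -> Prop) x :
  quasi_pseudometric d -> CB d (F x) ->
  is_lub (fun s => exists y, F x y /\ s = ds d (J x) y) (Rsup (fun s => exists y, F x y /\ s = ds d (J x) y)).
Proof.
  intros hq [[y0 Hy0] [[M HM] _]]. apply Rsup_is_lub with (ds d (J x) y0 + M).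
  - exists (ds d (J x) y0); eauto.
  - intros t [y [Hy ->]]. pose proof (ds_tri d hq (J x) y0 y). pose proof (HM y0 y Hy0 Hy). lra.
Qed.

Lemma cauchy_est {X} (d : X -> X -> R) (J : X -> X) (F : X -> X -> Prop) alpha :
  quasi_pseudometric d -> (forall x, CB d (F x)) -> 0 < alpha ->
  (forall x y, Haus d (F x) (F y) <= alpha * (dpt_set d (J x) (F y) + dset_pt d (F x) (J y))) ->
  forall x x' a a', (forall y, F x y -> ds d (J x) y <= a) -> (forall y, F x' y -> ds d (J x') y <= a') ->
  (1 - 2 * alpha) * d (J x) (J x') <= (1 + alpha) * (a + a').
Proof.
  intros hq hCB ha hH x x' a a' Ha Ha'.
  set (D := d (J x) (J x')).
  assert (D <= (1 + alpha) * (a + a') + 2 * alpha * D); [|lra].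
  apply le_eps. intros eps He.
  destruct (hCB x) as [[y Hy] _].
  pose proof (NB_CB d _ (hCB x)) as HNx. pose proof (NB_CB d _ (hCB x')) as HNx'.
  destruct (dpt_approx d hq y (F x') eps (proj1 (hCB x')) He) as [z [Hz Hyz]].
  pose proof (Haus_ge_l d hq _ _ y HNx HNx' Hy).
  pose proof (hH x x').
  pose proof (dpt_le d hq (J x) (F x') z Hz).
  pose proof (dset_le d hq (F x) (J x') y Hy).
  pose proof (d_tri d hq (J x) (J x') z).
  pose proof (d_tri d hq y (J x) (J x')).
  pose proof (d_tri d hq (J x) y (J x')).
  pose proof (d_tri d hq y z (J x')).
  pose proof (Ha y Hy). pose proof (Ha' z Hz).
  pose proof (ds_l d (J x) y). pose proof (ds_r d (J x) y).
  pose proof (ds_l d (J x') z). pose proof (ds_r d (J x') z).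
  assert (alpha * (dpt_set d (J x) (F x') + dset_pt d (F x) (J x')) <= alpha * (2 * D + a + a')).
  { apply Rmult_le_compat_l; unfold D in *; lra. }
  unfold D in *. lra.
Qed.

Lemma final_est {X} (d : X -> X -> R) (J : X -> X) (F : X -> X -> Prop) alpha :
  quasi_pseudometric d -> (forall x, CB d (F x)) -> 0 < alpha -> alpha < 1/2 ->
  (forall x y, Haus d (F x) (F y) <= alpha * (dpt_set d (J x) (F y) + dset_pt d (F x) (J y))) ->
  forall x0 x a y, (forall z, F x z -> ds d (J x) z <= a) -> F x0 y ->
  (1 - alpha) * d (J x0) y <= 3 * (ds d (J x0) (J x) + a) /\
  (1 - alpha) * d y (J x0) <= 3 * (ds d (J x0) (J x) + a).
Proof.
  intros hq hCB ha ha2 hH x0 x a y Ha Hy.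
  pose proof (NB_CB d _ (hCB x)) as HNx. pose proof (NB_CB d _ (hCB x0)) as HN0.
  set (e := ds d (J x0) (J x)).
  assert (He0 : 0 <= e) by apply (ds_nonneg d hq).
  assert (Ha0 : 0 <= a).
  { destruct (hCB x) as [[z0 Hz0] _]. pose proof (Ha z0 Hz0). pose proof (ds_nonneg d hq (J x) z0). lra. }
  pose proof (ds_l d (J x0) (J x)). pose proof (ds_r d (J x0) (J x)).
  split.
  - set (D := d (J x0) y).
    assert (D <= e + a + alpha * (2 * e + a + D)).
    2:{ assert (alpha * e <= e / 2) by nra. nra. }
    apply le_eps. intros eps Heps.
    destruct (dset_approx d hq (F x) y eps (proj1 (hCB x)) Heps) as [z [Hz Hzy]].
    pose proof (Haus_ge_r d hq _ _ y HNx HN0 Hy).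
    pose proof (hH x x0).
    pose proof (dpt_le d hq (J x) (F x0) y Hy).
    pose proof (dset_le d hq (F x) (J x0) z Hz).
    pose proof (d_tri d hq (J x) (J x0) y).
    pose proof (d_tri d hq z (J x) (J x0)).
    pose proof (d_tri d hq (J x0) (J x) y).
    pose proof (d_tri d hq (J x) z y).
    pose proof (Ha z Hz). pose proof (ds_l d (J x) z). pose proof (ds_r d (J x) z).
    assert (alpha * (dpt_set d (J x) (F x0) + dset_pt d (F x) (J x0)) <= alpha * (2 * e + a + D)).
    { apply Rmult_le_compat_l; unfold D, e in *; lra. }
    unfold D, e in *. lra.
  - set (D := d y (J x0)).
    assert (D <= e + a + alpha * (2 * e + a + D)).
    2:{ assert (alpha * e <= e / 2) by nra. nra. }
    apply le_eps. intros eps Heps.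
    destruct (dpt_approx d hq y (F x) eps (proj1 (hCB x)) Heps) as [z [Hz Hyz]].
    pose proof (Haus_ge_l d hq _ _ y HN0 HNx Hy).
    pose proof (hH x0 x).
    pose proof (dpt_le d hq (J x0) (F x) z Hz).
    pose proof (dset_le d hq (F x0) (J x) y Hy).
    pose proof (d_tri d hq (J x0) (J x) z).
    pose proof (d_tri d hq y (J x0) (J x)).
    pose proof (d_tri d hq y z (J x0)).
    pose proof (d_tri d hq z (J x) (J x0)).
    pose proof (Ha z Hz). pose proof (ds_l d (J x) z). pose proof (ds_r d (J x) z).
    assert (alpha * (dpt_set d (J x0) (F x) + dset_pt d (F x0) (J x)) <= alpha * (2 * e + a + D)).
    { apply Rmult_le_compat_l; unfold D, e in *; lra. }
    unfold D, e in *. lra.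
Qed.

Lemma uniq_se {X} (d : X -> X -> R) (J : X -> X) (F : X -> X -> Prop) r alpha :
  quasi_pseudometric d -> T0 d -> 0 < r -> (forall x y, r * d x y <= d (J x) (J y)) ->
  (forall x, CB d (F x)) -> 0 < alpha -> alpha < 1/2 ->
  (forall x y, Haus d (F x) (F y) <= alpha * (dpt_set d (J x) (F y) + dset_pt d (F x) (J y))) ->
  forall x0 x1, startpoint d J F x0 /\ endpoint d J F x0 -> startpoint d J F x1 /\ endpoint d J F x1 ->
  x0 = x1.
Proof.
  intros hq hT hr hJ hCB ha ha2 hH x0 x1 [Hs0 He0] [Hs1 He1].
  assert (Hsing : forall x, startpoint d J F x -> endpoint d J F x -> forall b, F x b -> b = J x).
  { intros x Hs He b Hb. destruct (se_zero d J F x hq (hCB x) Hs He b Hb). apply hT; auto. }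
  assert (Hin : forall x, startpoint d J F x -> endpoint d J F x -> F x (J x)).
  { intros x Hs He. destruct (hCB x) as [[b Hb] _]. rewrite <- (Hsing x Hs He b Hb). auto. }
  assert (Hk : forall u v, startpoint d J F u -> endpoint d J F u -> startpoint d J F v -> endpoint d J F v ->
     d (J u) (J v) = 0).
  { intros u v Hsu Heu Hsv Hev.
    pose proof (Haus_ge_l d hq (F u) (F v) (J u) (NB_CB d _ (hCB u)) (NB_CB d _ (hCB v)) (Hin u Hsu Heu)).
    assert (d (J u) (J v) <= dpt_set d (J u) (F v)).
    { apply (dpt_ge d hq). exists (J v); apply Hin; auto.
      intros b Hb. rewrite (Hsing v Hsv Hev b Hb). lra. }
    pose proof (hH u v).
    pose proof (dpt_le d hq (J u) (F v) (J v) (Hin v Hsv Hev)).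
    pose proof (dset_le d hq (F u) (J v) (J u) (Hin u Hsu Heu)).
    pose proof (d_nonneg d hq (J u) (J v)).
    assert (alpha * (dpt_set d (J u) (F v) + dset_pt d (F u) (J v)) <= alpha * (2 * d (J u) (J v)))
      by (apply Rmult_le_compat_l; lra).
    nra. }
  pose proof (Hk x0 x1 Hs0 He0 Hs1 He1). pose proof (Hk x1 x0 Hs1 He1 Hs0 He0).
  pose proof (hJ x0 x1). pose proof (hJ x1 x0).
  pose proof (d_nonneg d hq x0 x1). pose proof (d_nonneg d hq x1 x0).
  apply hT; nra.
Qed.

Lemma lim_zero (u : R) (e a : nat -> R) : (forall n, u <= 3 * (e n + a n)) ->
  (forall eps, 0 < eps -> exists N, forall n, (N <= n)%nat -> e n < eps) ->
  (forall eps, 0 < eps -> exists N, forall n, (N <= n)%nat -> a n < eps) -> u <= 0.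
Proof.
  intros Hu He Ha. destruct (Rle_or_lt u 0); auto.
  destruct (He (u/6)) as [N1 HN1]; [lra|]. destruct (Ha (u/6)) as [N2 HN2]; [lra|].
  specialize (Hu (Nat.max N1 N2)). specialize (HN1 (Nat.max N1 N2) (Nat.le_max_l _ _)).
  specialize (HN2 (Nat.max N1 N2) (Nat.le_max_r _ _)). lra.
Qed.

Theorem mainTheorem8 (X : Type) (d : X -> X -> R) (J : X -> X) (F : X -> X -> Prop)
  (r alpha : R) :
  inhabited X -> quasi_pseudometric d -> bicomplete d ->
  ds_continuous d J ->
  0 < r -> (forall x y, r * d x y <= d (J x) (J y)) ->
  (forall x, CB d (F x)) ->
  0 < alpha -> alpha < 1 / 2 -> 2 * r * alpha < 1 ->
  (forall x y, Haus d (F x) (F y) <=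
     alpha * (dpt_set d (J x) (F y) + dset_pt d (F x) (J y))) ->
  ((exists! x0, startpoint d J F x0 /\ endpoint d J F x0) <->
   approx_mix_point d J F).
Proof.
  intros hinh hq [hT hcomp] hcont hr hJ hCB ha ha2 _ hH.
  unfold approx_mix_point.
  set (S := fun x => Rsup (fun s => exists y, F x y /\ s = ds d (J x) y)).
  assert (HS0 : forall x, 0 <= S x).
  { intros x. destruct (hCB x) as [[y0 Hy0] _]. pose proof (ds_nonneg d hq (J x) y0).
    assert (ds d (J x) y0 <= S x). { apply (proj1 (S_lub d J F x hq (hCB x))). eauto. } lra. }
  assert (HSb : forall x y, F x y -> ds d (J x) y <= S x).
  { intros x y Hy. apply (proj1 (S_lub d J F x hq (hCB x))). eauto. }
  destruct hinh as [xi].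
  assert (Hinf : is_inf (fun t => exists x, t = S x) (Rinf (fun t => exists x, t = S x))).
  { apply Rinf_is_inf with 0. exists (S xi); eauto. intros t [x ->]; auto. }
  split.
  - intros [x0 [[Hs He] _]].
    assert (HSx0 : S x0 <= 0).
    { apply (proj2 (S_lub d J F x0 hq (hCB x0))). intros t [y [Hy ->]].
      destruct (se_zero d J F x0 hq (hCB x0) Hs He y Hy). unfold ds. apply Rmax_lub; lra. }
    change (Rinf (fun t => exists x, t = S x) = 0).
    apply (is_inf_unique _ _ _ Hinf). split.
    + intros t [x ->]; auto.
    + intros m' Hm'. pose proof (Hm' (S x0) (ex_intro _ x0 eq_refl)). lra.
  - intros Hamp. change (Rinf (fun t => exists x, t = S x) = 0) in Hamp. rewrite Hamp in Hinf.
    assert (Hch : forall n, exists x, S x < / (INR n + 1)).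
    { intros n. assert (0 < / (INR n + 1)) by (apply Rinv_0_lt_compat; pose proof (pos_INR n); lra).
      destruct (inf_approx _ _ _ Hinf H) as [t [[x ->] Ht]]. exists x; lra. }
    set (f := fun n => epsilon (inhabits xi) (fun x => S x < / (INR n + 1))).
    assert (Hf : forall n, S (f n) < / (INR n + 1)).
    { intros n. unfold f. apply epsilon_spec. apply Hch. }
    assert (Ha_lim : forall eps, 0 < eps -> exists N, forall n, (N <= n)%nat -> S (f n) < eps).
    { intros eps Heps. destruct (small 1 eps) as [N HN]; try lra. exists N. intros n Hn.
      specialize (HN n Hn). specialize (Hf n). lra. }
    assert (Hcau : ds_cauchy d f).
    { intros eps Heps.
      assert (Hc : 0 < (1 - 2 * alpha) * r) by (apply Rmult_lt_0_compat; lra).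
      destruct (Ha_lim ((1 - 2 * alpha) * r * eps / (2 * (1 + alpha)))) as [N HN].
      { apply Rdiv_lt_0_compat; [apply Rmult_lt_0_compat|]; lra. }
      exists N. intros m n Hm Hn.
      assert (Hb : forall p q, (N <= p)%nat -> (N <= q)%nat -> d (f p) (f q) < eps).
      { intros p q Hp Hq.
        pose proof (cauchy_est d J F alpha hq hCB ha hH (f p) (f q) (S (f p)) (S (f q))
                      (HSb (f p)) (HSb (f q))).
        pose proof (HN p Hp). pose proof (HN q Hq). pose proof (hJ (f p) (f q)).
        assert (Hk : 2 * (1 + alpha) * ((1 - 2 * alpha) * r * eps / (2 * (1 + alpha)))
                     = (1 - 2 * alpha) * r * eps) by (field; lra).
        apply Rmult_lt_reg_l with ((1 - 2 * alpha) * r); auto.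
        assert ((1 - 2 * alpha) * (r * d (f p) (f q)) <= (1 - 2 * alpha) * d (J (f p)) (J (f q)))
          by (apply Rmult_le_compat_l; lra).
        nra. }
      unfold ds. apply Rmax_lub_lt; auto. }
    destruct (hcomp f Hcau) as [x0 Hx0].
    assert (He_lim : forall eps, 0 < eps -> exists N, forall n, (N <= n)%nat -> ds d (J x0) (J (f n)) < eps).
    { intros eps Heps. destruct (hcont x0 eps Heps) as [delta [Hd Hdelta]].
      destruct (Hx0 delta Hd) as [N HN]. exists N. intros n Hn. apply Hdelta.
      rewrite ds_sym. auto. }
    assert (Hz : forall b, F x0 b -> d (J x0) b = 0 /\ d b (J x0) = 0).
    { intros b Hb.
      pose proof (fun n => final_est d J F alpha hq hCB ha ha2 hH x0 (f n) (S (f n)) b (HSb (f n)) Hb) as Hfe.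
      assert (H1 : (1 - alpha) * d (J x0) b <= 0).
      { apply (lim_zero _ (fun n => ds d (J x0) (J (f n))) (fun n => S (f n))); auto.
        intros n; apply (proj1 (Hfe n)). }
      assert (H2 : (1 - alpha) * d b (J x0) <= 0).
      { apply (lim_zero _ (fun n => ds d (J x0) (J (f n))) (fun n => S (f n))); auto.
        intros n; apply (proj2 (Hfe n)). }
      pose proof (d_nonneg d hq (J x0) b). pose proof (d_nonneg d hq b (J x0)).
      split; nra. }
    exists x0. split.
    + apply se_of_zero; auto.
    + intros x1 Hx1. apply (uniq_se d J F r alpha hq hT hr hJ hCB ha ha2 hH); auto.
      apply se_of_zero; auto.
Qed.
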